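(* Let $A\in GL_2(\mathbb{R})$ and let $\mathcal{C}$ be a multicone such that $A\mathcal{C}\subset\mathcal{C}$. If $A$ is conformal, then $A\mathcal{C}=\mathcal{C}$.
   Context: $\mathbb{RP}^1$ is the real projective line, on which $GL_2(\mathbb{R})$ acts. A multicone is a proper subset of $\mathbb{RP}^1$ that is a finite union of closed projective intervals. A matrix is conformal if its two eigenvalues have the same absolute value (equivalently, $|\det A|^{-1/2}MAM^{-1}\in O(2)$ for some invertible $M$). *)

(* Defs.v *)
From mathcomp Require Import all_boot all_order all_algebra.
From mathcomp Require Import reals.
Set Implicit Arguments. Unset Strict Implicit. Unset Printing Implicit Defensive.
Import Order.TTheory GRing.Theory Num.Theory.
Local Open Scope ring_scope.

(* A subset of RP^1 is encoded as the (scaling-invariant) set of nonzero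
   column vectors of R^2 whose line belongs to it. *)

Definition proj_cone (R : realType) (u w : 'cV[R]_2) : 'cV[R]_2 -> Prop :=
  fun v => v != 0 /\
    exists c a b : R, 0 <= a /\ 0 <= b /\ v = c *: (a *: u + b *: w).

(* A closed projective interval (with nonempty interior, not all of RP^1):
   endpoints given by two linearly independent vectors. *)
Definition proj_interval (R : realType) (I : 'cV[R]_2 -> Prop) : Prop :=
  exists u w : 'cV[R]_2, \det (row_mx u w) != 0 /\
    (forall v, I v <-> proj_cone u w v).

Definition multicone (R : realType) (C : 'cV[R]_2 -> Prop) : Prop :=
  (exists (n : nat) (I : 'I_n -> ('cV[R]_2 -> Prop)),
      (forall i, proj_interval (I i)) /\
      (forall v, C v <-> exists i, I i v)) /\
  (exists v : 'cV[R]_2, v != 0 /\ ~ C v).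

Definition mx_image (R : realType) (A : 'M[R]_2) (C : 'cV[R]_2 -> Prop) :
  'cV[R]_2 -> Prop := fun v => exists2 x, C x & v = A *m x.

Definition orthogonal_mx (R : realType) (B : 'M[R]_2) : Prop :=
  B^T *m B = 1%:M.

Definition conformal (R : realType) (A : 'M[R]_2) : Prop :=
  exists M : 'M[R]_2, M \in unitmx /\
    orthogonal_mx ((Num.sqrt `|\det A|)^-1 *: (M *m A *m invmx M)).

(* Main.v *)
Require Import Defs.
From mathcomp Require Import all_boot all_order all_algebra.
From mathcomp Require Import reals.
From mathcomp Require Import ring lra.
Set Implicit Arguments. Unset Strict Implicit. Unset Printing Implicit Defensive.
Import Order.TTheory GRing.Theory Num.Theory.
Local Open Scope ring_scope.

Definition det2 {R : realType} (u w : 'cV[R]_2) : R :=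
  u 0 0 * w 1 0 - u 1 0 * w 0 0.

Lemma det22 {R : realType} (M : 'M[R]_2) :
  \det M = M 0 0 * M 1 1 - M 0 1 * M 1 0.
Proof.
rewrite (expand_det_col _ 0) !big_ord_recl big_ord0 /cofactor /=.
rewrite !det_mx11 !mxE /=.
have -> : lift ord0 ord0 = 1 :> 'I_2 by apply/val_inj.
have -> : ord0 = 0 :> 'I_2 by apply/val_inj.
rewrite /bump /=.
have -> : lift 1 (0:'I_1) = 0 :> 'I_2 by apply/val_inj.
rewrite expr0 expr1; ring.
Qed.

Lemma det_row_mx {R : realType} (u w : 'cV[R]_2) :
  \det (row_mx u w) = det2 u w.
Proof.
rewrite det22 /det2.
have e1 i : row_mx u w i 0 = u i 0.
  by rewrite -(row_mxEl u w i 0); congr (row_mx u w i _); apply/val_inj.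
have e2 i : row_mx u w i 1 = w i 0.
  by rewrite -(row_mxEr u w i 0); congr (row_mx u w i _); apply/val_inj.
by rewrite !e1 !e2 [w 0 0 * _]mulrC.
Qed.

Lemma mul2 {R : realType} (P : 'M[R]_2) (v : 'cV[R]_2) i :
  (P *m v) i 0 = P i 0 * v 0 0 + P i 1 * v 1 0.
Proof.
rewrite !mxE !big_ord_recl big_ord0 addr0.
have -> : lift ord0 ord0 = 1 :> 'I_2 by apply/val_inj.
by have -> : ord0 = 0 :> 'I_2 by apply/val_inj.
Qed.

Lemma cV2_eq {R : realType} (v w : 'cV[R]_2) :
  v 0 0 = w 0 0 -> v 1 0 = w 1 0 -> v = w.
Proof.
move=> h0 h1; apply/matrixP => i j; rewrite !ord1.
case: i => [[|[|//]]] Hi.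
  by have -> : Ordinal Hi = 0 by apply/val_inj.
by have -> : Ordinal Hi = 1 by apply/val_inj.
Qed.

Lemma cV2_neq0 {R : realType} (v : 'cV[R]_2) :
  v != 0 -> v 0 0 != 0 \/ v 1 0 != 0.
Proof.
move=> hv; case: (eqVneq (v 0 0) 0) => h0; last by left.
case: (eqVneq (v 1 0) 0) => h1; last by right.
have hv0 : v = 0 by apply: cV2_eq; rewrite ?mxE.
by rewrite hv0 eqxx in hv.
Qed.

Lemma det2_mul {R : realType} (P : 'M[R]_2) x y :
  det2 (P *m x) (P *m y) = \det P * det2 x y.
Proof. rewrite /det2 !mul2 det22; ring. Qed.

Lemma sign_split {R : realType} (x y : R) :
  0 <= x * y -> (0 <= x /\ 0 <= y) \/ (x <= 0 /\ y <= 0).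
Proof.
move=> h; case: (lerP 0 x) => hx; case: (lerP 0 y) => hy.
- by left.
- by right; split; nra.
- by right; split; nra.
- by right; split; lra.
Qed.

Lemma cone_det {R : realType} (u w v : 'cV[R]_2) : det2 u w != 0 ->
  (proj_cone u w v <-> v != 0 /\ 0 <= det2 u v * det2 v w).
Proof.
move=> hD; split.
  move=> [hv [c [a [b [ha [hb ev]]]]]]; split => //; rewrite ev.
  have -> : det2 u (c *: (a *: u + b *: w)) * det2 (c *: (a *: u + b *: w)) w
     = (c ^+ 2 * (a * b)) * (det2 u w) ^+ 2.
    rewrite /det2 !mxE; ring.
  by apply: mulr_ge0; [apply: mulr_ge0; [apply: sqr_ge0|apply: mulr_ge0]|apply: sqr_ge0].
move=> [hv hp].
set al := det2 v w / det2 u w; set be := det2 u v / det2 u w.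
have ev : v = al *: u + be *: w.
  apply: cV2_eq; rewrite !mxE /al /be /det2; field; exact: hD.
have hab : 0 <= al * be.
  have -> : al * be = (det2 u v * det2 v w) / (det2 u w) ^+ 2.
    rewrite /al /be; field; exact: hD.
  by apply: divr_ge0 => //; apply: sqr_ge0.
split => //.
case: (sign_split hab) => [[h1 h2]|[h1 h2]].
  by exists 1, al, be; rewrite scale1r.
exists (-1), (- al), (- be); split; first by lra.
split; first by lra.
rewrite ev; apply: cV2_eq; rewrite !mxE; ring.
Qed.

Definition vec2 {R : realType} (a b : R) : 'cV[R]_2 :=
  \col_(i < 2) (if i == 0 then a else b).

Lemma vec2_0 {R : realType} (a b : R) : vec2 a b 0 0 = a.
Proof. by rewrite !mxE. Qed.
Lemma vec2_1 {R : realType} (a b : R) : vec2 a b 1 0 = b.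
Proof. by rewrite !mxE. Qed.

Definition tc {R : realType} (v : 'cV[R]_2) : R := v 0 0 / v 1 0.
Definition inI {R : realType} (J : R * R) (t : R) : bool := J.1 <= t <= J.2.
Definition Rcone {R : realType} (J : R * R) (v : 'cV[R]_2) : Prop :=
  v 1 0 != 0 /\ inI J (tc v).

Lemma cone_neq0 {R : realType} (u w v : 'cV[R]_2) : proj_cone u w v -> v != 0.
Proof. by case. Qed.

Lemma cone_scale {R : realType} (u w v : 'cV[R]_2) (c : R) :
  proj_cone u w v -> c != 0 -> proj_cone u w (c *: v).
Proof.
move=> [hv [c0 [a [b [ha [hb ev]]]]]] hc; split.
  by rewrite scaler_eq0 negb_or hc.
by exists (c * c0), a, b; do 2 split => //; rewrite ev scalerA.
Qed.

Lemma unit_neq0 {R : realType} (P : 'M[R]_2) (v : 'cV[R]_2) :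
  P \in unitmx -> v != 0 -> P *m v != 0.
Proof.
move=> hP hv; apply/eqP => h; move/eqP: hv; apply.
by rewrite -(mulKmx hP v) h mulmx0.
Qed.

Lemma cone_img {R : realType} (P : 'M[R]_2) (u w v : 'cV[R]_2) :
  P \in unitmx -> proj_cone u w v -> proj_cone (P *m u) (P *m w) (P *m v).
Proof.
move=> hP [hv [c [a [b [ha [hb ev]]]]]]; split; first exact: unit_neq0.
exists c, a, b; do 2 split => //.
by rewrite ev -scalemxAr mulmxDr -!scalemxAr.
Qed.

Lemma cone_img_inv {R : realType} (P : 'M[R]_2) (u w y : 'cV[R]_2) :
  P \in unitmx -> proj_cone (P *m u) (P *m w) y ->
  exists2 v, proj_cone u w v & y = P *m v.
Proof.
move=> hP hy; exists (invmx P *m y); last by rewrite mulKVmx.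
have hP' : invmx P \in unitmx by rewrite unitmx_inv.
have := cone_img hP' hy.
by rewrite !mulmxA !mulVmx // !mul1mx.
Qed.

Lemma btw {R : realType} (a b t : R) :
  0 <= (a - t) * (t - b) <-> Num.min a b <= t <= Num.max a b.
Proof.
case: (lerP a b) => hab.
  split.
    by move=> h; apply/andP; split; nra.
  by move/andP=> [h1 h2]; nra.
have hab' : b <= a by lra.
split.
  by move=> h; apply/andP; split; nra.
by move/andP=> [h1 h2]; nra.
Qed.

Lemma e1_neq0 {R : realType} : vec2 (1 : R) 0 != 0.
Proof.
apply/eqP => h; have := congr1 (fun x : 'cV[R]_2 => x 0 0) h.
by rewrite vec2_0 mxE; apply/eqP; exact: oner_neq0.
Qed.

Lemma cone_e1free {R : realType} (u w : 'cV[R]_2) :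
  det2 u w != 0 -> ~ proj_cone u w (vec2 1 0) ->
  [/\ 0 < u 1 0 * w 1 0, tc u != tc w &
   forall v, proj_cone u w v <->
     Rcone (Num.min (tc u) (tc w), Num.max (tc u) (tc w)) v].
Proof.
move=> hD he.
have hpos : 0 < u 1 0 * w 1 0.
  rewrite ltNge; apply/negP => h; apply: he; apply/(cone_det _ hD); split.
    exact: e1_neq0.
  rewrite /det2 !vec2_0 !vec2_1; nra.
have hu1 : u 1 0 != 0 by apply/eqP => h; move: hpos; rewrite h mul0r ltxx.
have hw1 : w 1 0 != 0 by apply/eqP => h; move: hpos; rewrite h mulr0 ltxx.
split => //.
  apply/eqP => e; move/eqP: hD; apply.
  have -> : det2 u w = u 1 0 * w 1 0 * (tc u - tc w).
    by rewrite /det2 /tc; field; apply/andP.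
  by rewrite e subrr mulr0.
move=> v; rewrite (cone_det _ hD); split.
  move=> [hv hp].
  have hv1 : v 1 0 != 0.
    apply/eqP => h1; move/eqP: hv; apply; apply: cV2_eq; rewrite ?h1 ?mxE //.
    move: hp; rewrite /det2 h1 => hp.
    have : 0 <= - (u 1 0 * w 1 0) * (v 0 0) ^+ 2 by rewrite expr2; nra.
    move=> h2.
    have : (v 0 0) ^+ 2 <= 0 by nra.
    by rewrite expr2; nra.
  split => //; apply/btw.
  have e : det2 u v * det2 v w =
      (u 1 0 * w 1 0 * (v 1 0) ^+ 2) * ((tc u - tc v) * (tc v - tc w)).
    by rewrite /det2 /tc; field; rewrite hu1 hw1 hv1.
  rewrite e in hp.
  have hq : 0 < u 1 0 * w 1 0 * (v 1 0) ^+ 2.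
    by apply: mulr_gt0 => //; rewrite exprn_even_gt0.
  by rewrite (pmulr_rge0 _ hq) in hp.
move=> [hv1 /btw hi]; split.
  by apply/eqP => h; move: hv1; rewrite h mxE eqxx.
have e : det2 u v * det2 v w =
    (u 1 0 * w 1 0 * (v 1 0) ^+ 2) * ((tc u - tc v) * (tc v - tc w)).
  by rewrite /det2 /tc; field; rewrite hu1 hw1 hv1.
rewrite e; apply: mulr_ge0 => //; apply: mulr_ge0; first exact: ltW.
exact: sqr_ge0.
Qed.

Definition ovl {R : realType} (x y : R * R) : bool := (y.1 <= x.2) && (x.1 <= y.2).
Definition disj {R : realType} (x y : R * R) : bool := ~~ ovl x y.
Definition wfs {R : realType} (s : seq (R * R)) : bool := all (fun J => J.1 < J.2) s.
Definition inS {R : realType} (s : seq (R * R)) (t : R) : bool := has (fun J => inI J t) s.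

Lemma pairwise_mem {T : eqType} (r : rel T) (s : seq T) x y :
  pairwise r s -> x \in s -> y \in s -> x != y -> r x y || r y x.
Proof.
elim: s => [//|z s IH]; rewrite pairwise_cons => /andP[/allP hz hs].
rewrite !in_cons => /orP[/eqP->|hx] /orP[/eqP->|hy] hne.
- by rewrite eqxx in hne.
- by rewrite hz.
- by rewrite hz ?orbT.
- exact: IH.
Qed.

Lemma fmin_le {R : realType} (f : R * R -> R) (a : R) (s : seq (R * R)) :
  foldr (fun y m => Num.min (f y) m) a s <= a /\
  forall y, y \in s -> foldr (fun y m => Num.min (f y) m) a s <= f y.
Proof.
elim: s => [|z s [IH1 IH2]] /=; first by split.
split; first by rewrite ge_min IH1 orbT.
move=> y; rewrite in_cons => /orP[/eqP->|hy]; first by rewrite ge_min lexx.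
by rewrite ge_min IH2 ?orbT.
Qed.

Lemma fmin_gt {R : realType} (f : R * R -> R) (a c : R) (s : seq (R * R)) :
  c < a -> (forall y, y \in s -> c < f y) ->
  c < foldr (fun y m => Num.min (f y) m) a s.
Proof.
move=> ha; elim: s => [|z s IH] hs /=; first by [].
rewrite lt_min hs ?mem_head //= IH // => y hy; apply: hs.
by rewrite in_cons hy orbT.
Qed.

Lemma fmin_ex {R : realType} (f : R * R -> R) (a t : R) (s : seq (R * R)) :
  foldr (fun y m => Num.min (f y) m) a s <= t -> t < a ->
  exists2 y, y \in s & f y <= t.
Proof.
move=> h ht; elim: s h => [|z s IH] /=.
  by move=> h; exfalso; move: (lt_le_trans ht h); rewrite ltxx.
rewrite ge_min => /orP[h|h]; first by exists z; rewrite ?mem_head.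
by case: (IH h) => y hy hy'; exists y => //; rewrite in_cons hy orbT.
Qed.

Lemma fmax_ge {R : realType} (f : R * R -> R) (a : R) (s : seq (R * R)) :
  a <= foldr (fun y m => Num.max (f y) m) a s /\
  forall y, y \in s -> f y <= foldr (fun y m => Num.max (f y) m) a s.
Proof.
elim: s => [|z s [IH1 IH2]] /=; first by split.
split; first by rewrite le_max IH1 orbT.
move=> y; rewrite in_cons => /orP[/eqP->|hy]; first by rewrite le_max lexx.
by rewrite le_max IH2 ?orbT.
Qed.

Lemma fmax_lt {R : realType} (f : R * R -> R) (a c : R) (s : seq (R * R)) :
  a < c -> (forall y, y \in s -> f y < c) ->
  foldr (fun y m => Num.max (f y) m) a s < c.
Proof.
move=> ha; elim: s => [|z s IH] hs /=; first by [].
rewrite gt_max hs ?mem_head //= IH // => y hy; apply: hs.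
by rewrite in_cons hy orbT.
Qed.

Lemma fmax_ex {R : realType} (f : R * R -> R) (a t : R) (s : seq (R * R)) :
  t <= foldr (fun y m => Num.max (f y) m) a s -> a < t ->
  exists2 y, y \in s & t <= f y.
Proof.
move=> h ht; elim: s h => [|z s IH] /=.
  by move=> h; exfalso; move: (lt_le_trans ht h); rewrite ltxx.
rewrite le_max => /orP[h|h]; first by exists z; rewrite ?mem_head.
by case: (IH h) => y hy hy'; exists y => //; rewrite in_cons hy orbT.
Qed.

Lemma ovlC {R : realType} (x y : R * R) : ovl x y = ovl y x.
Proof. by rewrite /ovl andbC. Qed.

Lemma disjE {R : realType} (x y : R * R) : disj x y = (x.2 < y.1) || (y.2 < x.1).
Proof. by rewrite /disj /ovl negb_and -!ltNge. Qed.

Lemma disj_mem {R : realType} (s : seq (R * R)) x y :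
  pairwise disj s -> x \in s -> y \in s -> x != y -> (x.2 < y.1) || (y.2 < x.1).
Proof.
move=> hp hx hy hne; have := pairwise_mem hp hx hy hne.
by rewrite /disj (ovlC y x) orbb /ovl negb_and -!ltNge.
Qed.

Lemma merge {R : realType} (s : seq (R * R)) : wfs s ->
  exists s', [/\ wfs s', pairwise disj s' & forall t, inS s t = inS s' t].
Proof.
elim: s => [|x s IH]; first by move=> _; exists [::].
rewrite /wfs /= => /andP[hx hs]; case: (IH hs) => s' [w' p' e'].
set O := filter (ovl x) s'; set N := filter (predC (ovl x)) s'.
set lo := foldr (fun y m => Num.min y.1 m) x.1 O.
set hi := foldr (fun y m => Num.max y.2 m) x.2 O.
have [lo1 lo2] := fmin_le (fun y => y.1) x.1 O.
have [hi1 hi2] := fmax_ge (fun y => y.2) x.2 O.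
rewrite -/lo in lo1 lo2; rewrite -/hi in hi1 hi2.
have wf' : forall J, J \in s' -> J.1 < J.2 by move=> J hJ; exact: (allP w' J hJ).
exists ((lo, hi) :: N); split.
- rewrite /wfs /= ; apply/andP; split.
    by apply: (le_lt_trans lo1); apply: (lt_le_trans hx).
  by apply/allP => J; rewrite mem_filter => /andP[_ hJ]; exact: wf'.
- rewrite pairwise_cons; apply/andP; split; last exact: pairwise_filter.
  apply/allP => z; rewrite mem_filter /= => /andP[hz zs].
  have hz' : (x.2 < z.1) || (z.2 < x.1) by rewrite -disjE.
  rewrite disjE /=.
  case/orP: hz' => hz'.
  + apply/orP; left.
    apply: fmax_lt => // y; rewrite mem_filter => /andP[hy ys].
    have hne : z != y by apply/eqP => e; move: hz; rewrite e hy.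
    have := disj_mem p' zs ys hne; move: hy; rewrite /ovl => /andP[hy1 hy2].
    have := wf' z zs; have := wf' y ys.
    move=> wy wz; case/orP => h; lra.
  + apply/orP; right.
    apply: fmin_gt => // y; rewrite mem_filter => /andP[hy ys].
    have hne : z != y by apply/eqP => e; move: hz; rewrite e hy.
    have := disj_mem p' zs ys hne; move: hy; rewrite /ovl => /andP[hy1 hy2].
    have := wf' z zs; have := wf' y ys.
    move=> wy wz; case/orP => h; lra.
- move=> t; rewrite /inS /= -/(inS s t) e' /inS /inI /=.
  apply/idP/idP.
  + case/orP => [/andP[h1 h2]|/hasP[y ys /andP[h1 h2]]].
      by rewrite (le_trans lo1 h1) (le_trans h2 hi1).
    case hy : (ovl x y).
      have yO : y \in O by rewrite mem_filter hy ys.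
      by rewrite (le_trans (lo2 y yO) h1) (le_trans h2 (hi2 y yO)).
    apply/orP; right; apply/hasP; exists y => //.
      by rewrite mem_filter /= hy ys.
    by rewrite h1 h2.
  + case/orP => [/andP[h1 h2]|/hasP[y]].
      case: (ltP t x.1) => ht1.
        have [y yO hy] := fmin_ex h1 ht1.
        move: yO; rewrite mem_filter /ovl => /andP[/andP[hy1 hy2] ys].
        apply/orP; right; apply/hasP; exists y => //; rewrite hy /=; lra.
      case: (leP t x.2) => ht2; first done.
      have [y yO hy] := fmax_ex h2 ht2.
      move: yO; rewrite mem_filter /ovl => /andP[/andP[hy1 hy2] ys].
      apply/orP; right; apply/hasP; exists y => //; rewrite hy andbT /=; lra.
    rewrite mem_filter => /andP[_ ys] hy.
    by apply/orP; right; apply/hasP; exists y.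
Qed.

Lemma single {R : realType} (s : seq (R * R)) (c d : R) :
  wfs s -> pairwise disj s -> c <= d ->
  (forall t, c <= t <= d -> inS s t) ->
  exists2 J, J \in s & (J.1 <= c) && (d <= J.2).
Proof.
move=> hw hp hcd hS.
have /hasP[J Js /andP[hJ1 hJ2]] : inS s c by apply: hS; rewrite lexx hcd.
case: (leP d J.2) => hd; first by exists J => //; rewrite hJ1 hd.
set F := filter (fun z => J.2 < z.1) s.
set y0 := foldr (fun z m => Num.min z.1 m) d F.
have hy0 : J.2 < y0 by apply: fmin_gt => // z; rewrite mem_filter => /andP[].
have [y1 y2] := fmin_le (fun z => z.1) d F; rewrite -/y0 in y1 y2.
set t := (J.2 + y0) / 2.
have /hasP[K Ks /andP[hK1 hK2]] : inS s t by apply: hS; apply/andP; split; rewrite /t; lra.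
rewrite /t in hK1 hK2.
case: (ltP J.2 K.1) => hK.
  have KF : K \in F by rewrite mem_filter hK Ks.
  have := y2 K KF; rewrite /= /t => h; lra.
have hne : J != K by apply/eqP => e; rewrite -e in hK2; move: hK2; rewrite /t => h; lra.
have := disj_mem hp Js Ks hne; have := (allP hw J Js); have := (allP hw K Ks).
rewrite /t => /= h3 h4 /orP[h|h]; lra.
Qed.

Lemma tc_vec2 {R : realType} (a : R) : tc (vec2 a 1) = a.
Proof. by rewrite /tc vec2_0 vec2_1 divr1. Qed.

Lemma RconeJ {R : realType} (J : R * R) : J.1 < J.2 ->
  forall v, proj_cone (vec2 J.1 1) (vec2 J.2 1) v <-> Rcone J v.
Proof.
move=> hJ v.
have hD : det2 (vec2 J.1 1) (vec2 J.2 1) != 0.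
  rewrite /det2 !vec2_0 !vec2_1 !mulr1; apply/eqP => h; lra.
have he : ~ proj_cone (vec2 J.1 1) (vec2 J.2 1) (vec2 1 0).
  move/(cone_det _ hD) => [_]; rewrite /det2 !vec2_0 !vec2_1 => h; nra.
have [_ _ ->] := cone_e1free hD he.
rewrite !tc_vec2 (min_idPl (ltW hJ)) (max_idPr (ltW hJ)).
by case: J hJ hD he.
Qed.

Lemma Rcone_mono {R : realType} (J J' : R * R) v :
  J'.1 <= J.1 -> J.2 <= J'.2 -> Rcone J v -> Rcone J' v.
Proof.
move=> h1 h2 [hv /andP[h3 h4]]; split => //; apply/andP; split.
  exact: le_trans h3.
exact: le_trans h2.
Qed.

Lemma endpoint {R : realType} (J : R * R) (Q : 'M[R]_2) : J.1 < J.2 ->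
  (forall v, Rcone J v -> Rcone J (Q *m v)) ->
  det2 (vec2 J.1 1) (Q *m vec2 J.1 1) * det2 (vec2 J.2 1) (Q *m vec2 J.2 1) <= 0.
Proof.
case: J => a b /= hab hQ.
have /hQ [hx1 /andP[hx2 hx3]] : Rcone (a, b) (vec2 a 1).
  by rewrite /Rcone tc_vec2 vec2_1 oner_neq0 /inI /= lexx (ltW hab).
have /hQ [hy1 /andP[hy2 hy3]] : Rcone (a, b) (vec2 b 1).
  by rewrite /Rcone tc_vec2 vec2_1 oner_neq0 /inI /= lexx (ltW hab).
move: hx1 hx2 hx3 hy1 hy2 hy3; rewrite /tc /= !mul2 !vec2_0 !vec2_1 !mulr1.
set x0 := Q 0 0 * a + Q 0 1; set x1 := Q 1 0 * a + Q 1 1.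
set y0 := Q 0 0 * b + Q 0 1; set y1 := Q 1 0 * b + Q 1 1.
move=> hx1 hx2 hx3 hy1 hy2 hy3.
have hxy : 0 < x1 * y1.
  rewrite ltNge; apply/negP => hle.
  have hlt : x1 * y1 < 0.
    rewrite lt_neqAle hle andbT mulf_eq0 negb_or hx1 hy1 //.
  have hd : x1 - y1 != 0 by apply/eqP => h; nra.
  set sv := x1 / (x1 - y1).
  have hs0 : 0 <= sv <= 1.
    rewrite /sv; case: (ltP 0 x1) => h.
      have hy : y1 < 0 by nra.
      apply/andP; split; first by apply: divr_ge0; lra.
      by rewrite ler_pdivrMr; lra.
    have hx : x1 < 0 by rewrite lt_neqAle hx1 h.
    have hy : 0 < y1 by nra.
    have -> : x1 / (x1 - y1) = (- x1) / (y1 - x1).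
      by field; rewrite hd andbT; apply/eqP => h0; move/eqP: hd; apply; lra.
    apply/andP; split; first by apply: divr_ge0; lra.
    by rewrite ler_pdivrMr; lra.
  have /hQ [hv _] : Rcone (a, b) (vec2 ((1 - sv) * a + sv * b) 1).
    rewrite /Rcone tc_vec2 vec2_1 oner_neq0 /inI /=; split => //.
    move/andP: hs0 => [h1 h2]; apply/andP; split; nra.
  move: hv; rewrite mul2 !vec2_0 !vec2_1 mulr1 /sv => /eqP; apply.
  rewrite /x1 /y1 in hd *; field; exact: hd.
have e : (a * x1 - x0) * (b * y1 - y0) = (x1 * y1) * ((a - x0 / x1) * (b - y0 / y1)).
  by field; rewrite hx1 hy1.
rewrite /det2 !mul2 !vec2_0 !vec2_1 !mulr1 !mul1r -/x0 -/x1 -/y0 -/y1 e.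
apply: mulr_ge0_le0; first exact: ltW.
apply: mulr_le0_ge0; lra.
Qed.

Lemma min_lt_max {R : realType} (a b : R) : a != b -> Num.min a b < Num.max a b.
Proof.
move=> h; case: (lerP a b) => hab.
  by rewrite lt_neqAle h hab.
by [].
Qed.

Lemma sigma_step {R : realType} (s : seq (R * R)) (P : 'M[R]_2) :
  P \in unitmx -> wfs s -> pairwise disj s ->
  (forall v : 'cV[R]_2, v 1 0 != 0 /\ inS s (tc v) -> (P *m v) 1 0 != 0 /\ inS s (tc (P *m v))) ->
  forall J, J \in s -> exists2 J', J' \in s &
    forall v, Rcone J v -> Rcone J' (P *m v).
Proof.
move=> hP hw hp hinv J Js.
have hJ : J.1 < J.2 := allP hw J Js.
set u := vec2 J.1 1; set w := vec2 J.2 1.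
have Cs : forall v, Rcone J v -> v 1 0 != 0 /\ inS s (tc v).
  move=> v [hv hi]; split => //; apply/hasP; exists J => //.
have hDuw : det2 u w != 0.
  rewrite /u /w /det2 !vec2_0 !vec2_1 !mulr1; apply/eqP => h; lra.
have hD : det2 (P *m u) (P *m w) != 0.
  rewrite det2_mul mulf_neq0 //; by rewrite -unitfE -unitmxE.
have hC : forall z, proj_cone (P *m u) (P *m w) z -> z 1 0 != 0 /\ inS s (tc z).
  move=> z /(cone_img_inv hP) [v hv ->]; apply: hinv; apply: Cs.
  by apply/RconeJ.
have he : ~ proj_cone (P *m u) (P *m w) (vec2 1 0).
  by move/hC => [h _]; move: h; rewrite vec2_1 eqxx.
have [_ _ hchar] := cone_e1free hD he.
set lo := Num.min _ _ in hchar; set hi := Num.max _ _ in hchar.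
have hlohi : lo <= hi by rewrite /lo /hi; case: (lerP (tc (P *m u)) (tc (P *m w))) => h //; exact: ltW.
have [J' J's /andP[h1 h2]] : exists2 J', J' \in s & (J'.1 <= lo) && (hi <= J'.2).
  apply: single => // t ht.
  have /hchar /hC [_] : Rcone (lo, hi) (vec2 t 1).
    by rewrite /Rcone vec2_1 oner_neq0 tc_vec2.
  by rewrite tc_vec2.
exists J' => // v hv.
apply: (@Rcone_mono _ (lo, hi) J' _ h1 h2); apply/hchar; apply: cone_img => //.
by apply/RconeJ.
Qed.

Lemma ML1 {R : realType} (n : nat) (U W : 'I_n -> 'cV[R]_2) (P : 'M[R]_2) :
  (forall i, det2 (U i) (W i) != 0) ->
  (forall i, ~ proj_cone (U i) (W i) (vec2 1 0)) ->
  P \in unitmx ->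
  (forall v, (exists i, proj_cone (U i) (W i) v) ->
     exists j, proj_cone (U j) (W j) (P *m v)) ->
  (0 < n)%N ->
  exists m, (0 < m)%N /\ exists u w, det2 u w != 0 /\
    det2 u ((P ^+ m) *m u) * det2 w ((P ^+ m) *m w) <= 0.
Proof.
move=> hD he hP hinv hn.
pose pr i := (Num.min (tc (U i)) (tc (W i)), Num.max (tc (U i)) (tc (W i))).
have hI : forall i v, proj_cone (U i) (W i) v <-> Rcone (pr i) v.
  by move=> i v; have [_ _ ->] := cone_e1free (hD i) (he i).
have hpr : forall i, (pr i).1 < (pr i).2.
  by move=> i; have [_ h _] := cone_e1free (hD i) (he i); exact: min_lt_max.
set s := [seq pr i | i <- enum 'I_n].
have ws : wfs s by apply/allP => J /mapP [i _ ->]; exact: hpr.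
have [s' [ws' ps' es']] := merge ws.
have hCs : forall v, (exists i, proj_cone (U i) (W i) v) <-> v 1 0 != 0 /\ inS s' (tc v).
  move=> v; split.
    move=> [i /hI [hv hi]]; split => //; rewrite -es'; apply/hasP; exists (pr i) => //.
    by apply/mapP; exists i => //; rewrite mem_enum.
  move=> [hv]; rewrite -es' => /hasP [J /mapP [i _ ->] hi].
  by exists i; apply/hI.
have hinv' : forall v : 'cV[R]_2, v 1 0 != 0 /\ inS s' (tc v) ->
    (P *m v) 1 0 != 0 /\ inS s' (tc (P *m v)).
  by move=> v /hCs /hinv /hCs.
have hsig := sigma_step hP ws' ps' hinv'.
have [J0 J0s] : exists J0, J0 \in s'.
  have i0 : 'I_n := Ordinal hn.
  have hU0 : U i0 != 0.
    by apply/eqP => h; move: (hD i0); rewrite h /det2 !mxE !mul0r subrr eqxx.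
  have hU : proj_cone (U i0) (W i0) (U i0).
    apply/(cone_det _ (hD i0)); split => //.
    by rewrite /det2 (mulrC (U i0 0 0)) subrr mul0r.
  have [_ /hasP [J Js _]] : U i0 1 0 != 0 /\ inS s' (tc (U i0)).
    by apply/hCs; exists i0.
  by exists J.
set k := size s'.
set d0 := (0 : R, 0 : R).
have hk : (0 < k)%N by rewrite /k; case: (s') J0s.
have hg : forall i : 'I_k, exists j : 'I_k,
    forall v, Rcone (nth d0 s' i) v -> Rcone (nth d0 s' j) (P *m v).
  move=> i; have [J' J's hJ'] := hsig (nth d0 s' i) (mem_nth d0 (ltn_ord i)).
  have hix : (index J' s' < k)%N by rewrite /k index_mem.
  exists (Ordinal hix).
  by rewrite (nth_index d0 J's).
have [g hgP] := fin_all_exists hg.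
have hit : forall j (i : 'I_k) v, Rcone (nth d0 s' i) v ->
    Rcone (nth d0 s' (iter j g i)) ((P ^+ j) *m v).
  elim=> [|j IH] i v hv; first by rewrite expr0 mul1mx.
  by rewrite iterS exprS -mulmxE -mulmxA; apply: hgP; apply: IH.
set i0 : 'I_k := Ordinal hk.
pose f (j : 'I_k.+1) := iter j g i0.
have /injectivePn [a [b hab heq]] : ~~ injectiveb f.
  apply/injectiveP => hinj; have := leq_card f hinj; rewrite !card_ord ltnn //.
have [a' [b' [hlt he']]] : exists a' b' : nat, (a' < b')%N /\ iter a' g i0 = iter b' g i0.
  case: (ltngtP a b) => h.
  - by exists a, b.
  - by exists b, a.
  - by move/val_inj: h => h; rewrite h eqxx in hab.
set i1 := iter a' g i0; set m := (b' - a')%N.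
have hper : iter m g i1 = i1.
  by rewrite /i1 -iterD /m subnK ?(ltnW hlt) // -he'.
set J := nth d0 s' i1.
have hJ : J.1 < J.2 := allP ws' J (mem_nth d0 (ltn_ord i1)).
have hE := @endpoint R J (P ^+ m) hJ.
exists m; split; first by rewrite /m subn_gt0.
exists (vec2 J.1 1), (vec2 J.2 1); split.
  rewrite /det2 !vec2_0 !vec2_1 mulr1 mul1r subr_eq0; by apply/negP => /eqP h; move: hJ; rewrite h ltxx.
have hx : forall v, Rcone J v -> Rcone J ((P ^+ m) *m v) by move=> v hv; have := hit m i1 v hv; rewrite hper.
by apply: hE hx.
Qed.

Lemma conj_pow {R : realType} (B P : 'M[R]_2) m : B \in unitmx ->
  (invmx B *m P *m B) ^+ m = invmx B *m (P ^+ m) *m B.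
Proof.
move=> hB; elim: m => [|m IH].
  by rewrite !expr0 mulmx1 mulVmx.
rewrite !exprS IH -!mulmxE !mulmxA.
by rewrite -[invmx B *m P *m B *m invmx B]mulmxA mulmxV // mulmx1.
Qed.

Lemma col0_row_mx {R : realType} (u w : 'cV[R]_2) i : row_mx u w i 0 = u i 0.
Proof. by rewrite -(row_mxEl u w i 0); congr (row_mx u w i _); apply/val_inj. Qed.
Lemma col1_row_mx {R : realType} (u w : 'cV[R]_2) i : row_mx u w i 1 = w i 0.
Proof. by rewrite -(row_mxEr u w i 0); congr (row_mx u w i _); apply/val_inj. Qed.

Lemma ML {R : realType} (n : nat) (U W : 'I_n -> 'cV[R]_2) (P : 'M[R]_2) :
  (forall i, det2 (U i) (W i) != 0) ->
  (exists p, p != 0 /\ forall i, ~ proj_cone (U i) (W i) p) ->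
  P \in unitmx ->
  (forall v, (exists i, proj_cone (U i) (W i) v) ->
     exists j, proj_cone (U j) (W j) (P *m v)) ->
  (0 < n)%N ->
  exists m, (0 < m)%N /\ exists u w, det2 u w != 0 /\
    det2 u ((P ^+ m) *m u) * det2 w ((P ^+ m) *m w) <= 0.
Proof.
move=> hD [p [hp hpC]] hP hinv hn.
set B := row_mx p (vec2 (- p 1 0) (p 0 0)).
have hdB : \det B != 0.
  rewrite det_row_mx /det2 !vec2_0 !vec2_1.
  have [h|h] := cV2_neq0 hp.
    apply/eqP => e; have : p 0 0 ^+ 2 + p 1 0 ^+ 2 = 0 by rewrite !expr2; lra.
    move/eqP; rewrite paddr_eq0 ?sqr_ge0 // !sqrf_eq0 (negbTE h) //.
  apply/eqP => e; have : p 0 0 ^+ 2 + p 1 0 ^+ 2 = 0 by rewrite !expr2; lra.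
  move/eqP; rewrite paddr_eq0 ?sqr_ge0 // !sqrf_eq0 (negbTE h) andbF //.
have hB : B \in unitmx by rewrite unitmxE unitfE.
have hBi : invmx B \in unitmx by rewrite unitmx_inv.
have hBe : B *m vec2 1 0 = p.
  apply: cV2_eq; rewrite !mul2 !vec2_0 !vec2_1 mulr1 mulr0 addr0;
  by rewrite col0_row_mx.
pose U' i := invmx B *m U i; pose W' i := invmx B *m W i.
pose P' := invmx B *m P *m B.
have conjC : forall i v, proj_cone (U' i) (W' i) v <-> proj_cone (U i) (W i) (B *m v).
  move=> i v; split.
    by move/(cone_img hB); rewrite /U' /W' !mulKVmx.
  move/(cone_img hBi); rewrite mulKmx //.
have [m [hm [u [w [huw hle]]]]] : exists m, (0 < m)%N /\ exists u w, det2 u w != 0 /\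
    det2 u ((P' ^+ m) *m u) * det2 w ((P' ^+ m) *m w) <= 0.
  apply: (@ML1 R n U' W' P') => //.
  - move=> i; rewrite /U' /W' det2_mul mulf_neq0 // det_inv invr_neq0 //.
  - by move=> i /conjC; rewrite hBe; apply: hpC.
  - by rewrite /P' !unitmx_mul hBi hP hB.
  - move=> v [i /conjC hi]; have [j hj] := hinv (B *m v) (ex_intro _ i hi).
    exists j; apply/conjC; rewrite /P' !mulmxA mulmxV // mul1mx.
    by rewrite -mulmxA.
exists m; split => //; exists (B *m u), (B *m w); split.
  by rewrite det2_mul mulf_neq0.
rewrite /P' conj_pow // in hle.
have e : forall x : 'cV[R]_2, P ^+ m *m (B *m x) = B *m (invmx B *m P ^+ m *m B *m x).
  by move=> x; rewrite !mulmxA mulmxV // mul1mx.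
rewrite !e !det2_mul.
have -> : \det B * det2 u (invmx B *m P ^+ m *m B *m u) *
  (\det B * det2 w (invmx B *m P ^+ m *m B *m w)) =
  (\det B ^+ 2) * (det2 u (invmx B *m P ^+ m *m B *m u) *
  det2 w (invmx B *m P ^+ m *m B *m w)) by rewrite expr2; ring.
by apply: mulr_ge0_le0 => //; apply: sqr_ge0.
Qed.

Lemma mulmx2 {R : realType} (X Y : 'M[R]_2) i j :
  (X *m Y) i j = X i 0 * Y 0 j + X i 1 * Y 1 j.
Proof.
rewrite !mxE !big_ord_recl big_ord0 addr0.
have -> : lift ord0 ord0 = 1 :> 'I_2 by apply/val_inj.
by have -> : ord0 = 0 :> 'I_2 by apply/val_inj.
Qed.

Lemma mx2_eq {R : realType} (X Y : 'M[R]_2) :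
  X 0 0 = Y 0 0 -> X 0 1 = Y 0 1 -> X 1 0 = Y 1 0 -> X 1 1 = Y 1 1 -> X = Y.
Proof.
move=> h1 h2 h3 h4; apply/matrixP => i j.
case: i => [[|[|//]]] Hi; case: j => [[|[|//]]] Hj.
- have e1 : Ordinal Hi = 0 by apply/val_inj.
  have e2 : Ordinal Hj = 0 by apply/val_inj.
  by rewrite e1 e2.
- have e1 : Ordinal Hi = 0 by apply/val_inj.
  have e2 : Ordinal Hj = 1 by apply/val_inj.
  by rewrite e1 e2.
- have e1 : Ordinal Hi = 1 by apply/val_inj.
  have e2 : Ordinal Hj = 0 by apply/val_inj.
  by rewrite e1 e2.
- have e1 : Ordinal Hi = 1 by apply/val_inj.
  have e2 : Ordinal Hj = 1 by apply/val_inj.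
  by rewrite e1 e2.
Qed.

Lemma det2_scaler {R : realType} (x y : 'cV[R]_2) (c : R) :
  det2 x (c *: y) = c * det2 x y.
Proof. rewrite /det2 !mxE; ring. Qed.

Lemma orth_pow {R : realType} (O : 'M[R]_2) k :
  O^T *m O = 1%:M -> (O ^+ k)^T *m (O ^+ k) = 1%:M.
Proof.
move=> hO; elim: k => [|k IH]; first by rewrite expr0 trmx1 mulmx1.
rewrite exprS -mulmxE trmx_mul mulmxA -[(O ^+ k)^T *m O^T *m O]mulmxA hO.
by rewrite mulmx1.
Qed.

Lemma det_pow {R : realType} (O : 'M[R]_2) k : \det (O ^+ k) = \det O ^+ k.
Proof.
elim: k => [|k IH]; first by rewrite !expr0 det1.
by rewrite !exprS -mulmxE det_mulmx IH.
Qed.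

Lemma CL {R : realType} (A : 'M[R]_2) (m : nat) (u w : 'cV[R]_2) :
  A \in unitmx -> conformal A -> u != 0 -> w != 0 ->
  det2 u ((A ^+ 2) ^+ m *m u) * det2 w ((A ^+ 2) ^+ m *m w) <= 0 ->
  exists l : R, l != 0 /\ (A ^+ 2) ^+ m = l%:M.
Proof.
move=> hA [M [hM hO]].
set rho := Num.sqrt `|\det A|.
have hdA : \det A != 0 by rewrite -unitfE -unitmxE.
have hrho : 0 < rho by rewrite /rho sqrtr_gt0 normr_gt0.
set O := rho^-1 *: (M *m A *m invmx M) in hO.
have eA : A = invmx M *m (rho *: O) *m M.
  rewrite /O scalerA mulfV ?gt_eqF // scale1r.
  by rewrite !mulmxA mulVmx // mul1mx mulmxKV.
set N := O ^+ (2 * m).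
have eK : (A ^+ 2) ^+ m = rho ^+ (2 * m) *: (invmx M *m N *m M).
  by rewrite -exprM eA conj_pow // exprZn -scalemxAr -scalemxAl.
have hN : N^T *m N = 1%:M by apply: orth_pow.
have hdN : \det N = 1.
  have h2 : \det O ^+ 2 = 1.
    by have := congr1 determinant hO; rewrite det_mulmx det_tr det1 expr2.
  by rewrite /N det_pow exprM h2 expr1n.
have e00 := congr1 (fun X : 'M[R]_2 => X 0 0) hN.
have e01 := congr1 (fun X : 'M[R]_2 => X 0 1) hN.
have e11 := congr1 (fun X : 'M[R]_2 => X 1 1) hN.
move: e00 e01 e11; rewrite /= !mulmx2 !mxE /= => e00 e01 e11.
move: hdN; rewrite det22 => hdN.
have hc : N 0 1 = - N 1 0 /\ N 1 1 = N 0 0.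
  have : (N 0 1 + N 1 0) ^+ 2 + (N 1 1 - N 0 0) ^+ 2 = 0.
    rewrite !expr2; nra.
  move/eqP; rewrite paddr_eq0 ?sqr_ge0 // !sqrf_eq0 => /andP[/eqP h1 /eqP h2].
  split; lra.
have hq : forall x : 'cV[R]_2, det2 x (N *m x) = N 1 0 * (x 0 0 ^+ 2 + x 1 0 ^+ 2).
  move=> x; rewrite /det2 !mul2; case: hc => -> ->; rewrite !expr2; ring.
have hK : forall x : 'cV[R]_2, det2 x ((A ^+ 2) ^+ m *m x) =
    rho ^+ (2 * m) * \det (invmx M) * (N 1 0 * ((M *m x) 0 0 ^+ 2 + (M *m x) 1 0 ^+ 2)).
  move=> x; rewrite eK -scalemxAl det2_scaler -hq -mulrA -det2_mul.
  by rewrite mulKmx // !mulmxA.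
move=> hu hw; rewrite !hK => hle.
have hpos : forall x : 'cV[R]_2, x != 0 -> 0 < (M *m x) 0 0 ^+ 2 + (M *m x) 1 0 ^+ 2.
  move=> x hx; have := cV2_neq0 (unit_neq0 hM hx).
  case=> h.
    apply: (@lt_le_trans _ _ ((M *m x) 0 0 ^+ 2)); first by rewrite exprn_even_gt0.
    by rewrite lerDl sqr_ge0.
  apply: (@lt_le_trans _ _ ((M *m x) 1 0 ^+ 2)); first by rewrite exprn_even_gt0.
  by rewrite lerDr sqr_ge0.
have hd : \det (invmx M) != 0 by rewrite det_inv invr_neq0 // -unitfE -unitmxE.
set S1 := _ + _ in hle; set S2 := (M *m w) 0 0 ^+ 2 + _ in hle.
set b := N 1 0 in hle hc hq e00 e01 e11 hdN.
have hS1 := hpos u hu; have hS2 := hpos w hw.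
rewrite -/S1 -/S2 in hS1 hS2.
set r := rho ^+ (2 * m) * \det (invmx M) in hle.
have hr : 0 < r ^+ 2 by rewrite exprn_even_gt0 // mulf_neq0 // expf_neq0 // gt_eqF.
have hb : b = 0.
  have : (r ^+ 2 * S1 * S2) * b ^+ 2 <= 0.
    by rewrite (_ : _ * _ = r * (b * S1) * (r * (b * S2))) // !expr2; ring.
  have hp : 0 < r ^+ 2 * S1 * S2 by apply: mulr_gt0 => //; apply: mulr_gt0.
  rewrite (pmulr_rle0 _ hp) => h.
  by apply/eqP; rewrite -sqrf_eq0 eq_le h sqr_ge0.
have ha : N 0 0 ^+ 2 = 1 by rewrite expr2; move: e00; rewrite hb; lra.
have eN : N = (N 0 0)%:M.
  case: hc => h1 h2.
  apply: mx2_eq; rewrite !mxE /= ?mulr1n ?mulr0n //; by rewrite ?h1 ?h2 ?hb ?oppr0.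
exists (rho ^+ (2 * m) * N 0 0); split.
  apply: mulf_neq0; first by rewrite expf_neq0 // gt_eqF.
  by apply/eqP => h; move: ha; rewrite h expr2 mulr0 => /eqP; rewrite eq_sym oner_eq0.
set a := N 0 0 in eN *.
rewrite eK eN mul_mx_scalar -scalemxAl mulVmx // scalemx1.
by rewrite scale_scalar_mx.
Qed.

Lemma det2_nz {R : realType} (u w : 'cV[R]_2) : det2 u w != 0 -> u != 0 /\ w != 0.
Proof.
move=> h; split; apply/eqP => e; move: h; rewrite e /det2 !mxE ?mul0r ?mulr0 subrr eqxx //.
Qed.

Theorem lemma3p6 (R : realType) (A : 'M[R]_2) (C : 'cV[R]_2 -> Prop) :
  A \in unitmx -> multicone C ->
  (forall v, mx_image A C v -> C v) ->
  conformal A ->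
  forall v, mx_image A C v <-> C v.
Proof.
move=> hA [[n [I [hI hC]]] [p [hp hpC]]] hinv hconf v.
split; first exact: hinv.
move=> hv.
have hI' : forall i, exists uw : 'cV[R]_2 * 'cV[R]_2,
    \det (row_mx uw.1 uw.2) != 0 /\ forall v, I i v <-> proj_cone uw.1 uw.2 v.
  by move=> i; case: (hI i) => u [w h]; exists (u, w).
have [UW hUW] := fin_all_exists hI'.
pose U i := (UW i).1; pose W i := (UW i).2.
have hCc : forall x, C x <-> exists i, proj_cone (U i) (W i) x.
  move=> x; rewrite hC; split; move=> [i hi]; exists i; move: hi;
  by have [_ ->] := hUW i.
have hD : forall i, det2 (U i) (W i) != 0.
  by move=> i; rewrite -det_row_mx; case: (hUW i).
have hn : (0 < n)%N.
  by case: (hCc v) => /(_ hv) [i _] _; exact: (leq_ltn_trans (leq0n i) (ltn_ord i)).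
have hAC : forall x, C x -> C (A *m x).
  by move=> x hx; apply: hinv; exists x.
have hAk : forall k x, C x -> C ((A ^+ k) *m x).
  elim=> [|k IH] x hx; first by rewrite expr0 mul1mx.
  by rewrite exprS -mulmxE -mulmxA; apply: hAC; apply: IH.
have hP : A ^+ 2 \in unitmx by rewrite expr2 -mulmxE unitmx_mul hA.
have [m [hm [u [w [huw hle]]]]] := @ML R n U W (A ^+ 2) hD
  (ex_intro _ p (conj hp (fun i hi => hpC (proj2 (hCc p) (ex_intro _ i hi)))))
  hP (fun x hx => proj1 (hCc _) (hAk 2%N x (proj2 (hCc x) hx))) hn.
have [hu hw] := det2_nz huw.
have [l [hl el]] := CL hA hconf hu hw hle.
have hscale : C (l^-1 *: v).
  case: (hCc v) => /(_ hv) [i hi] _; apply/hCc; exists i.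
  by apply: cone_scale => //; rewrite invr_neq0.
exists ((A ^+ (2 * m).-1) *m (l^-1 *: v)); first exact: hAk.
rewrite mulmxA mulmxE -exprS prednK ?muln_gt0 // exprM el.
by rewrite mul_scalar_mx scalerA mulfV // scale1r.
Qed.
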